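(* Under the setting and assumptions in the context, fix a client $i$ and weights $\boldsymbol\alpha_i=(\alpha_{i1},\dots,\alpha_{im})\in\mathbb R^m$ with $\sum_{j=1}^m\alpha_{ij}=1$. Let $\hat{\mathbf g}_j$ be the empirical classifier of client $j$, $\mathbf g_j:=\mathbb E[\hat{\mathbf g}_j]$, and $\hat{\mathbf g}_i^*:=\sum_{j=1}^m\alpha_{ij}\hat{\mathbf g}_j$. Define the testing loss $R_i(\boldsymbol\alpha_i):=\mathbb E\big[\chi^2_i\big(P^{(i)}_{XY},P_XQ_{Y|X}(\hat{\mathbf g}^*_i)\big)\big]$ and $V_j:=n_j\,\mathbb E\big[\chi^2_i\big(P_XQ_{Y|X}(\hat{\mathbf g}_j),P_XQ_{Y|X}(\mathbf g_j)\big)\big]$. Then $$R_i(\boldsymbol\alpha_i)=\chi^2_i\Big(P_XQ_{Y|X}(\mathbf g_i),\sum_{j=1}^m\alpha_{ij}P_XQ_{Y|X}(\mathbf g_j)\Big)+\sum_{j=1}^m\frac{\alpha_{ij}^2}{n_j}V_j+\chi^2_i\big(P^{(i)}_{XY},P_XQ_{Y|X}(\mathbf g_i)\big),$$ which is a quadratic function of $\boldsymbol\alpha_i$; here $V_j$ does not depend on $\boldsymbol\alpha_i$.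
   Context: Let $\mathcal X$ be a finite input space and $\mathcal Y$ a finite label set with $|\mathcal Y|=K$. Let $\mathbf f:\mathcal X\to\mathbb R^d$ be a fixed feature map. For a function $\mathbf g:\mathcal Y\to\mathbb R^d$ define the model $Q_{Y|X}(y|x;\mathbf g)=\frac1K\big(1+\mathbf f(x)^\top\mathbf g(y)\big)$. There are $m$ clients; client $j$ has a true joint distribution $P^{(j)}_{XY}$ on $\mathcal X\times\mathcal Y$. Standing assumptions: (A1) $P^{(j)}_X=P_X$ for all $j$, with $P_X(x)>0$ for all $x$; (A2) $\mathbb E_{P_X}[\mathbf f(X)]=\mathbf 0$; (A3) $\Lambda:=\mathbb E_{P_X}[\mathbf f(X)\mathbf f(X)^\top]$ is invertible. Client $j$ holds $n_j$ i.i.d. samples from $P^{(j)}_{XY}$, samples of different clients being independent; $\hat P^{(j)}_{XY}$ is the resulting empirical distribution and $\mathbb E$ denotes expectation over sampling. The $\chi^2_i$-distance is $\chi^2_i(P,Q)=\sum_{x,y}\frac{(P(x,y)-Q(x,y))^2}{P^{(i)}_X(x)}$ (applied to arbitrary real functions on $\mathcal X\times\mathcal Y$), and $P_XQ_{Y|X}(\mathbf g)$ denotes $(x,y)\mapsto P_X(x)Q_{Y|X}(y|x;\mathbf g)$. The empirical classifier of client $j$ is $\hat{\mathbf g}_j:=\arg\min_{\mathbf g:\mathcal Y\to\mathbb R^d}\chi^2_j\big(\hat P^{(j)}_{XY},P_XQ_{Y|X}(\mathbf g)\big)$ (which exists and is unique under (A1)-(A3)). *)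

(* Defs.v *)
From HB Require Import structures.
From mathcomp Require Import all_boot all_order all_algebra.
From mathcomp Require Import reals.
Set Implicit Arguments. Unset Strict Implicit. Unset Printing Implicit Defensive.
Import Order.TTheory GRing.Theory Num.Theory.
Local Open Scope ring_scope.

Section Defs.
Variables (R : realType) (X Y : finType) (d : nat).

Definition dotv (u v : 'rV[R]_d) : R := \sum_(k < d) u 0 k * v 0 k.

Definition Qmodel (f : X -> 'rV[R]_d) (g : Y -> 'rV[R]_d) (x : X) (y : Y) : R :=
  (1 + dotv (f x) (g y)) / #|Y|%:R.

Definition PXQ (PX : X -> R) (f : X -> 'rV[R]_d) (g : Y -> 'rV[R]_d) : X -> Y -> R :=
  fun x y => PX x * Qmodel f g x y.

Definition marginal (P : X -> Y -> R) (x : X) : R := \sum_(y : Y) P x y.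

(* chi^2_i(A, B) = sum_{x,y} (A(x,y) - B(x,y))^2 / P^{(i)}_X(x), Pi = P^{(i)}_{XY} *)
Definition chi2 (Pi : X -> Y -> R) (A B : X -> Y -> R) : R :=
  \sum_(x : X) \sum_(y : Y) (A x y - B x y) ^+ 2 / marginal Pi x.

Definition emp_dist (nj : nat) (s : {ffun 'I_nj -> X * Y}) (x : X) (y : Y) : R :=
  (\sum_(k < nj) ((s k == (x, y)) : nat)%:R) / nj%:R.

Variables (m : nat) (n : 'I_m -> nat).

Definition sample_space := {dffun forall j : 'I_m, {ffun 'I_(n j) -> X * Y}}.

Definition sample_prob (P : 'I_m -> X -> Y -> R) (S : sample_space) : R :=
  \prod_(j < m) \prod_(k < n j) P j (S j k).1 (S j k).2.

Definition expect (P : 'I_m -> X -> Y -> R) (F : sample_space -> R) : R :=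
  \sum_(S : sample_space) sample_prob P S * F S.

Definition expect_vec (P : 'I_m -> X -> Y -> R) (F : sample_space -> 'rV[R]_d)
  : 'rV[R]_d :=
  \sum_(S : sample_space) sample_prob P S *: F S.

End Defs.

(* Main.v *)
Require Import Defs.
From HB Require Import structures.
From mathcomp Require Import all_boot all_order all_algebra.
From mathcomp Require Import reals.
From mathcomp Require Import ring lra.
Import Order.TTheory GRing.Theory Num.Theory.
Local Open Scope ring_scope.

Lemma dep_distr (R : realType) (I : finType) (T_ : I -> finType)
  (G : forall i, T_ i -> R) :
  \sum_(S : {dffun forall i, T_ i}) \prod_i G i (S i) = \prod_i \sum_(s : T_ i) G i s.
Proof.
rewrite (reindex (@dffun_of_fprod I T_)); last exact/onW_bij/dffun_of_fprod_bij.
have E : forall t : fprod T_, \prod_i G i (dffun_of_fprod t i) = \prod_i [ffun s => G i s] (t i).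
  by move=> t; apply: eq_bigr => i _; rewrite !ffunE.
rewrite (eq_bigr _ (fun t _ => E t)).
rewrite (@big_fprod R 0 1 *%R _ I T_ (fun i => [ffun s => G i s])).
have E2 : forall i, \sum_(s : T_ i) G i s = \sum_(s : T_ i) [ffun s => G i s] s.
  by move=> i; apply: eq_bigr => s _; rewrite ffunE.
rewrite (eq_bigr _ (fun i _ => E2 i)).
rewrite (eq_bigr _ (fun i _ => big_tag (op:=+%R) (fun i => [ffun s => G i s]) i)).
rewrite bigA_distr_big_dep.
by apply: eq_bigl => g.
Qed.

Section Prob.
Variables (R : realType) (X Y : finType) (m : nat) (n : 'I_m -> nat).
Variable (P : 'I_m -> X -> Y -> R).
Hypothesis P1 : forall j, \sum_(x : X) \sum_(y : Y) P j x y = 1.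

Definition w j (s : {ffun 'I_(n j) -> X * Y}) : R :=
  \prod_(k < n j) P j (s k).1 (s k).2.

Lemma sample_probE S : sample_prob P S = \prod_j w j (S j).
Proof. by []. Qed.

Lemma pairsum j : \sum_(z : X * Y) P j z.1 z.2 = 1.
Proof. by rewrite -(P1 j) pair_bigA. Qed.

Lemma wsum j : \sum_s w j s = 1.
Proof.
rewrite /w -(bigA_distr_bigA (fun (k : 'I_(n j)) (z : X * Y) => P j z.1 z.2)) /=.
by rewrite (eq_bigr (fun _ => 1)) ?big1_eq // => k _; rewrite pairsum.
Qed.

Lemma expect_prod (F : forall j, {ffun 'I_(n j) -> X * Y} -> R) :
  \sum_(S : sample_space X Y n) sample_prob P S * \prod_j F j (S j)
  = \prod_j \sum_s w j s * F j s.
Proof.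
rewrite -dep_distr; apply: eq_bigr => S _.
by rewrite sample_probE -big_split.
Qed.

Lemma Ej j (G : {ffun 'I_(n j) -> X * Y} -> R) :
  \sum_(S : sample_space X Y n) sample_prob P S * G (S j)
  = \sum_s w j s * G s.
Proof.
have H := expect_prod (fun k s => untag 1 G (Tagged (fun k => {ffun 'I_(n k) -> X * Y}) s)).
have E1 : \prod_(k | k != j) \sum_s w k s * untag 1 G (Tagged (fun k => {ffun 'I_(n k) -> X * Y}) s) = 1.
  apply: big1 => k kj; rewrite -[RHS](wsum k); apply: eq_bigr => s _.
  by rewrite untag_dflt ?mulr1.
rewrite [X in _ = X](bigD1 j) //= E1 mulr1 in H.
have E0 : forall s, untag 1 G (Tagged (fun k => {ffun 'I_(n k) -> X * Y}) s) = G s.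
  by move=> s; rewrite (@untagE _ _ _ 1 j G (Tagged _ s) (erefl j)).
have E0' : \sum_s w j s * untag 1 G (Tagged (fun k => {ffun 'I_(n k) -> X * Y}) s) = \sum_s w j s * G s.
  by apply: eq_bigr => s _; rewrite E0.
rewrite E0' in H.
rewrite -H; apply: eq_bigr => S _; congr (_ * _).
rewrite (bigD1 j) //= big1 ?mulr1 ?E0 //.
by move=> k kj; rewrite untag_dflt.
Qed.

Lemma Ejk j k (G : {ffun 'I_(n j) -> X * Y} -> R) (H : {ffun 'I_(n k) -> X * Y} -> R) :
  j != k ->
  \sum_(S : sample_space X Y n) sample_prob P S * (G (S j) * H (S k))
  = (\sum_s w j s * G s) * (\sum_s w k s * H s).
Proof.
move=> jk.
pose T_ := (fun k => {ffun 'I_(n k) -> X * Y}).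
have E0 : forall l (s : T_ l) (G' : T_ l -> R), untag 1 G' (Tagged T_ s) = G' s.
  by move=> l s G'; rewrite (@untagE _ _ _ 1 l G' (Tagged T_ s) (erefl l)).
have HH := expect_prod (fun l s => untag 1 G (Tagged T_ s) * untag 1 H (Tagged T_ s)).
have E1 : \prod_(l | (l != j) && (l != k)) \sum_s w l s * (untag 1 G (Tagged T_ s) * untag 1 H (Tagged T_ s)) = 1.
  apply: big1 => l /andP[lj lk]; rewrite -[RHS](wsum l); apply: eq_bigr => s _.
  by rewrite !untag_dflt ?mulr1.
have E2 : \sum_s w j s * (untag 1 G (Tagged T_ s) * untag 1 H (Tagged T_ s)) = \sum_s w j s * G s.
  by apply: eq_bigr => s _; rewrite (@untag_dflt _ _ _ 1 k H (Tagged T_ s)) ?mulr1 ?E0.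
have E3 : \sum_s w k s * (untag 1 G (Tagged T_ s) * untag 1 H (Tagged T_ s)) = \sum_s w k s * H s.
  by apply: eq_bigr => s _; rewrite (@untag_dflt _ _ _ 1 j G (Tagged T_ s)) ?mul1r ?E0 // eq_sym.
rewrite [X in _ = X](bigD1 j) //= [X in _ = _ * X](bigD1 k) 1?eq_sym //= in HH.
rewrite E1 E2 E3 mulr1 in HH.

rewrite -HH; apply: eq_bigr => S _; congr (_ * _).
rewrite (bigD1 j) //= (bigD1 k) 1?eq_sym //= big1 ?mulr1; last first.
  by move=> l /andP[lj lk]; rewrite !untag_dflt ?mulr1.
rewrite (@untag_dflt _ _ _ 1 k H (Tagged T_ (S j))) ?mulr1 //.
rewrite (@untag_dflt _ _ _ 1 j G (Tagged T_ (S k))) ?mul1r ?E0 //.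
by rewrite eq_sym.
Qed.

Lemma Eone : \sum_(S : sample_space X Y n) sample_prob P S = 1.
Proof.
have H := expect_prod (fun _ _ => 1).
have E : \prod_(j < m) \sum_s w j s * 1 = 1.
  by apply: big1 => j _; rewrite -[RHS](wsum j); apply: eq_bigr => s _; rewrite mulr1.
rewrite E in H; rewrite -H; apply: eq_bigr => S _.
by rewrite [X in _ = _ * X]big1 ?mulr1.
Qed.

Lemma Eemp j x y : (0 < n j)%N ->
  \sum_s w j s * emp_dist R s x y = P j x y.
Proof.
move=> nj0.
rewrite /emp_dist.
under eq_bigr do rewrite mulrA.
rewrite -mulr_suml.
under eq_bigr do rewrite mulr_sumr.
rewrite exchange_big /=.
have Ek : forall k : 'I_(n j), \sum_s w j s * ((s k == (x, y)) : nat)%:R = P j x y.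
  move=> k.
  pose H := fun (l : 'I_(n j)) (z : X * Y) =>
     P j z.1 z.2 * (if l == k then ((z == (x, y)) : nat)%:R else 1).
  have -> : \sum_s w j s * ((s k == (x, y)) : nat)%:R = \sum_(s : {ffun 'I_(n j) -> X * Y}) \prod_l H l (s l).
    apply: eq_bigr => s _; rewrite /H big_split /=; congr (_ * _).
    rewrite (bigD1 k) //= eqxx big1 ?mulr1 //.
    by move=> l /negbTE ->.
  rewrite -bigA_distr_bigA (bigD1 k) //= [X in _ * X]big1 ?mulr1; last first.
    move=> l /negbTE lk; rewrite /H lk -[RHS](pairsum j).
    by apply: eq_bigr => z _; rewrite mulr1.
  rewrite /H eqxx (bigD1 (x, y)) //= eqxx mulr1 big1 ?addr0 //.
  by move=> z /negbTE ->; rewrite mulr0.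
rewrite (eq_bigr _ (fun k _ => Ek k)) sumr_const card_ord.
by rewrite -(mulr_natr (P j x y)) mulfK // pnatr_eq0 -lt0n.
Qed.

End Prob.
Section Model.
Variables (R : realType) (X Y : finType) (d : nat).
Variables (f : X -> 'rV[R]_d) (PX : X -> R).

Lemma dotv_sumZ (I : finType) (c : I -> R) (v : I -> 'rV[R]_d) (u : 'rV[R]_d) :
  dotv u (\sum_i c i *: v i) = \sum_i c i * dotv u (v i).
Proof.
rewrite /dotv.
under eq_bigr do rewrite summxE mulr_sumr.
rewrite exchange_big /=; apply: eq_bigr => i _; rewrite mulr_sumr.
by apply: eq_bigr => k _; rewrite mxE mulrCA.
Qed.

Lemma dotvD (u a b : 'rV[R]_d) : dotv u (a + b) = dotv u a + dotv u b.
Proof. by rewrite /dotv -big_split; apply: eq_bigr => k _; rewrite mxE mulrDr. Qed.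

Lemma dotvZ (u a : 'rV[R]_d) c : dotv u (c *: a) = c * dotv u a.
Proof. by rewrite /dotv mulr_sumr; apply: eq_bigr => k _; rewrite mxE mulrCA. Qed.

Lemma dotvN (u a : 'rV[R]_d) : dotv u (- a) = - dotv u a.
Proof. by rewrite -scaleN1r dotvZ mulN1r. Qed.

Lemma dotvB (u a b : 'rV[R]_d) : dotv u (a - b) = dotv u a - dotv u b.
Proof. by rewrite dotvD dotvN. Qed.

Lemma sum2_lin (a b c : X -> Y -> R) (c1 c2 : R) :
  \sum_x \sum_y (a x y - c1 * b x y + c2 * c x y) =
  \sum_x \sum_y a x y - c1 * (\sum_x \sum_y b x y) + c2 * (\sum_x \sum_y c x y).
Proof.
rewrite !mulr_sumr -sumrB -big_split /=; apply: eq_bigr => x _.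
by rewrite !mulr_sumr -sumrB -big_split.
Qed.

Lemma quad0 (b C : R) : 0 <= C -> (forall t, 0 <= - (2 * t) * b + t ^+ 2 * C) -> b = 0.
Proof.
move=> C0 H; have := H (b / (C + 1)).
have C1 : C + 1 != 0 by rewrite gt_eqF // ltr_wpDl.
set t := b / (C + 1).
have -> : - (2 * t) * b + t ^+ 2 * C = - (b ^+ 2 * (C + 2)) / (C + 1) ^+ 2.
  by rewrite /t; field.
rewrite pmulr_lge0; last by rewrite invr_gt0 exprn_gt0 // ltr_wpDl.
rewrite oppr_ge0 => Hb.
have : b ^+ 2 * (C + 2) == 0.
  by rewrite eq_le Hb mulr_ge0 ?sqr_ge0 // addr_ge0.
by rewrite mulf_eq0 sqrf_eq0 => /orP[/eqP|]; last by rewrite gt_eqF // ltr_wpDl.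
Qed.

Lemma foc (Pj : X -> Y -> R) e g :
  (forall x, marginal Pj x = PX x) -> (forall x, 0 < PX x) ->
  (forall g', chi2 Pj e (PXQ PX f g) <= chi2 Pj e (PXQ PX f g')) ->
  forall h, \sum_x \sum_y (e x y - PXQ PX f g x y) * dotv (f x) (h y) = 0.
Proof.
move=> Hm HP Hmin h.
have [Y0|Yn0] := eqVneq #|Y| 0%N.
  apply: big1 => x _; apply: big1 => y _; exfalso.
  have : (0 < #|Y|)%N by apply/card_gt0P; exists y.
  by rewrite Y0.
pose K : R := #|Y|%:R.
have K0 : K != 0 by rewrite pnatr_eq0.
set B := \sum_x \sum_y _.
set C := \sum_x \sum_y (PX x * dotv (f x) (h y) / K) ^+ 2 / PX x.
have C0 : 0 <= C.
  apply: sumr_ge0 => x _; apply: sumr_ge0 => y _.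
  by rewrite divr_ge0 ?sqr_ge0 // ltW.
suff : B / K = 0 by move/eqP; rewrite mulf_eq0 invr_eq0 (negbTE K0) orbF => /eqP.
apply: (@quad0 _ C C0) => t.
have := Hmin (fun y => g y + t *: h y).
rewrite -subr_ge0.
have -> : chi2 Pj e (PXQ PX f (fun y => g y + t *: h y)) =
  \sum_x \sum_y ((e x y - PXQ PX f g x y) ^+ 2 / marginal Pj x
     - (2 * t / K) * ((e x y - PXQ PX f g x y) * dotv (f x) (h y))
     + t ^+ 2 * ((PX x * dotv (f x) (h y) / K) ^+ 2 / PX x)).
  rewrite /chi2; apply: eq_bigr => x _; apply: eq_bigr => y _.
  rewrite /PXQ /Qmodel dotvD dotvZ Hm -/K.
  have := HP x; rewrite lt0r => /andP[P0 _].
  by field; apply/andP.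
rewrite sum2_lin -/C /chi2 -/B.
set A := \sum_x _.
suff -> : - (2 * t) * (B / K) + t ^+ 2 * C = A - 2 * t / K * B + t ^+ 2 * C - A by [].
by field.
Qed.

Lemma dot0_row (D : 'rV[R]_d) :
  (\sum_(x : X) PX x *: ((f x)^T *m f x)) \in unitmx ->
  (forall x, dotv (f x) D = 0) -> D = 0.
Proof.
move=> HL H0.
have fD : forall x, f x *m D^T = 0.
  move=> x; apply/matrixP => a b; rewrite !mxE (ord1 a) (ord1 b) -[RHS](H0 x).
  by apply: eq_bigr => k _; rewrite mxE.
have LD : (\sum_(x : X) PX x *: ((f x)^T *m f x)) *m D^T = 0.
  rewrite mulmx_suml big1 // => x _.
  by rewrite -scalemxAl -mulmxA fD mulmx0 scaler0.
have : D^T = 0 by rewrite -(mulKmx HL D^T) LD mulmx0.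
by move/(congr1 trmx); rewrite trmxK trmx0.
Qed.

Lemma uniq_min (Pj : X -> Y -> R) e g1 g2 :
  (forall x, marginal Pj x = PX x) -> (forall x, 0 < PX x) ->
  (\sum_(x : X) PX x *: ((f x)^T *m f x)) \in unitmx ->
  (forall g', chi2 Pj e (PXQ PX f g1) <= chi2 Pj e (PXQ PX f g')) ->
  (forall g', chi2 Pj e (PXQ PX f g2) <= chi2 Pj e (PXQ PX f g')) ->
  forall y, g1 y = g2 y.
Proof.
move=> Hm HP HL H1 H2 y0.
pose h := fun y => g2 y - g1 y.
have F1 := @foc Pj e g1 Hm HP H1 h.
have F2 := @foc Pj e g2 Hm HP H2 h.
have Yn0 : #|Y| != 0%N by rewrite -lt0n; apply/card_gt0P; exists y0.
pose K : R := #|Y|%:R.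
have K0 : 0 < K by rewrite ltr0n lt0n.
have S0 : \sum_x \sum_y PX x * dotv (f x) (h y) ^+ 2 / K = 0.
  apply: (@eq_trans _ _ (\sum_x \sum_y (e x y - PXQ PX f g1 x y) * dotv (f x) (h y)
     - \sum_x \sum_y (e x y - PXQ PX f g2 x y) * dotv (f x) (h y))); last first.
    by rewrite F1 F2 subr0.
  rewrite -sumrB; apply: eq_bigr => x _.
  rewrite -sumrB; apply: eq_bigr => y _.
  rewrite /PXQ /Qmodel /h dotvB -/K; field.
  by rewrite gt_eqF.
have Hxy : forall x y, dotv (f x) (h y) = 0.
  move=> x y.
  have ge0 : forall x y, 0 <= PX x * dotv (f x) (h y) ^+ 2 / K.
    move=> x' y'; apply: divr_ge0; last exact: ltW. apply: mulr_ge0; [exact: ltW | exact: sqr_ge0].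
  move/eqP: S0; rewrite psumr_eq0; last by move=> x' _; apply: sumr_ge0.
  move/allP/(_ x (mem_index_enum x)); rewrite implyTb => /eqP.
  move/eqP; rewrite psumr_eq0; last by move=> y' _; apply: ge0.
  move/allP/(_ y (mem_index_enum y)); rewrite implyTb.
  rewrite !mulf_eq0 invr_eq0 (gt_eqF K0) (gt_eqF (HP x)) orbF /=.
  by rewrite orbb => /eqP.
have : h y0 = 0 by apply: dot0_row => // x; apply: Hxy.
by move/eqP; rewrite /h subr_eq0 => /eqP.
Qed.

End Model.
Lemma var_expand (R : realType) (T I : finType) (p : T -> R) (c : I -> T -> R) (al : I -> R) (u : R) :
  \sum_S p S = 1 -> (forall j, \sum_S p S * c j S = 0) ->
  (forall j k, j != k -> \sum_S p S * (c j S * c k S) = 0) ->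
  \sum_S p S * (u + \sum_j al j * c j S) ^+ 2 =
    u ^+ 2 + \sum_j al j ^+ 2 * \sum_S p S * c j S ^+ 2.
Proof.
move=> p1 c0 cjk.
have E : forall S, p S * (u + \sum_j al j * c j S) ^+ 2 =
   p S * u ^+ 2 + (2 * u) * (\sum_j al j * (p S * c j S))
   + \sum_j \sum_k (al j * al k) * (p S * (c j S * c k S)).
  move=> S; rewrite sqrrD [(\sum_j _) ^+ 2]expr2 big_distrlr /= mulrDr mulrDr.
  congr (_ + _ + _).
    have -> : \sum_j al j * (p S * c j S) = p S * \sum_j al j * c j S.
      by rewrite mulr_sumr; apply: eq_bigr => j _; ring.
    by rewrite -mulr_natr; ring.
  rewrite mulr_sumr; apply: eq_bigr => j _; rewrite mulr_sumr; apply: eq_bigr => k _; ring.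
rewrite (eq_bigr _ (fun S _ => E S)) !big_split /=.
rewrite -mulr_suml p1 mul1r -mulr_sumr exchange_big /=.
rewrite (eq_bigr (fun _ => 0)); last by move=> j _; rewrite -mulr_sumr c0 mulr0.
rewrite big1_eq mulr0 addr0; congr (_ + _).
rewrite exchange_big /=; apply: eq_bigr => j _.
rewrite exchange_big /= (bigD1 j) //= [X in _ + X]big1 ?addr0; last first.
  by move=> k kj; rewrite -mulr_sumr cjk ?mulr0 // eq_sym.
rewrite -mulr_sumr expr2; congr (_ * _); apply: eq_bigr => S _; by rewrite expr2.
Qed.

Theorem theorem1 (R : realType) (X Y : finType) (d m : nat)
  (f : X -> 'rV[R]_d) (PX : X -> R) (P : 'I_m -> X -> Y -> R) (n : 'I_m -> nat)
  (ghat : sample_space X Y n -> 'I_m -> Y -> 'rV[R]_d)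
  (i : 'I_m) (alpha : 'I_m -> R) :
  (forall j x y, 0 <= P j x y) ->
  (forall j, \sum_(x : X) \sum_(y : Y) P j x y = 1) ->
  (forall j x, marginal (P j) x = PX x) ->
  (forall x, 0 < PX x) ->
  \sum_(x : X) PX x *: f x = 0 ->
  (\sum_(x : X) PX x *: ((f x)^T *m f x)) \in unitmx ->
  (forall j, (0 < n j)%N) ->
  (forall (S : sample_space X Y n) (j : 'I_m) (g : Y -> 'rV[R]_d),
     chi2 (P j) (@emp_dist R X Y (n j) (S j)) (PXQ PX f (ghat S j))
       <= chi2 (P j) (@emp_dist R X Y (n j) (S j)) (PXQ PX f g)) ->
  \sum_(j < m) alpha j = 1 ->
  let gbar := fun j y => expect_vec P (fun S => ghat S j y) in
  let ghat_star := fun S y => \sum_(j < m) alpha j *: ghat S j y in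
  let Ri := expect P (fun S => chi2 (P i) (P i) (PXQ PX f (ghat_star S))) in
  let V := fun j => (n j)%:R *
      expect P (fun S => chi2 (P i) (PXQ PX f (ghat S j)) (PXQ PX f (gbar j))) in
  Ri = chi2 (P i) (PXQ PX f (gbar i))
                  (fun x y => \sum_(j < m) alpha j * PXQ PX f (gbar j) x y)
       + \sum_(j < m) (alpha j ^+ 2 / (n j)%:R) * V j
       + chi2 (P i) (P i) (PXQ PX f (gbar i)).
Proof.
move=> HP0 HP1 Hm HPX Hcent HL Hn Hmin Hal gbar ghat_star Ri V.
pose pS := fun S : sample_space X Y n => sample_prob P S.
have E1 : \sum_S pS S = 1 := @Eone _ _ _ _ _ _ HP1.
pose K : R := #|Y|%:R.
have [z0 _] : exists z0 : X * Y, true.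
  case: (pickP (@predT (X * Y))) => [z0 _|Z0]; first by exists z0.
  move: (@pairsum _ _ _ _ _ HP1 i); rewrite big1 => [/eqP|z _]; first by rewrite eq_sym oner_eq0.
  by have := Z0 z.
have Yn0 : (0 < #|Y|)%N by apply/card_gt0P; exists z0.2.
have K0 : K != 0 by rewrite pnatr_eq0 -lt0n.
pose q j := PXQ PX f (gbar j).
pose qh S j := PXQ PX f (ghat S j).
have Eq : forall j x y, \sum_S pS S * qh S j x y = q j x y.
  move=> j x y.
  rewrite /q /qh /PXQ /Qmodel /gbar /expect_vec dotv_sumZ -/K.
  apply: (@eq_trans _ _ (PX x / K * (\sum_S pS S + \sum_S pS S * dotv (f x) (ghat S j y)))).
    by rewrite mulrDr !mulr_sumr -big_split /=; apply: eq_bigr => S _; field.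
  by rewrite E1; field.
(* ghat S j depends only on S j *)
pose T_ := fun l => {ffun 'I_(n l) -> X * Y}.
pose S0 : sample_space X Y n := [ffun l => [ffun _ => z0]].
pose upd j (s : T_ j) : sample_space X Y n :=
  [ffun l => @dfwith _ T_ (fun l => S0 l) j s l].
have updj : forall j s, upd j s j = s by move=> j s; rewrite ffunE dfwith_in.
pose G j (s : T_ j) := ghat (upd j s) j.
have HG : forall S j y, ghat S j y = G j (S j) y.
  move=> S j y.
  apply: (@uniq_min _ _ _ _ f PX (P j) (emp_dist R (S j)) _ _ (Hm j) HPX HL (Hmin S j)).
  by move=> g'; have := Hmin (upd j (S j)) j g'; rewrite updj.
pose c j S x y := q j x y - qh S j x y.
have Ec : forall j x y, \sum_S pS S * c j S x y = 0.
  move=> j x y; rewrite /c.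
  under eq_bigr do rewrite mulrBr.
  by rewrite sumrB Eq -mulr_suml E1 mul1r subrr.
have Ecc : forall j k x y, j != k -> \sum_S pS S * (c j S x y * c k S x y) = 0.
  move=> j k x y jk.
  have cG : forall l S, c l S x y = q l x y - PXQ PX f (G l (S l)) x y.
    move=> l S; rewrite /c /qh /PXQ /Qmodel.
    by congr (_ - _ * ((1 + _) / _)); rewrite HG.
  under eq_bigr do rewrite !cG.
  rewrite (@Ejk _ _ _ _ _ _ HP1 j k (fun s => q j x y - PXQ PX f (G j s) x y)
             (fun s => q k x y - PXQ PX f (G k s) x y) jk).
  rewrite -(@Ej _ _ _ _ _ _ HP1 j (fun s => q j x y - PXQ PX f (G j s) x y)).
  have -> : \sum_S sample_prob P S * (q j x y - PXQ PX f (G j (S j)) x y) = 0.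
    by rewrite -[RHS](Ec j x y); apply: eq_bigr => S _; rewrite cG.
  by rewrite mul0r.
have star : forall S x y, PXQ PX f (ghat_star S) x y = \sum_j alpha j * qh S j x y.
  move=> S x y; rewrite /qh /PXQ /Qmodel /ghat_star dotv_sumZ -/K.
  apply: (@eq_trans _ _ (PX x / K * (\sum_j alpha j + \sum_j alpha j * dotv (f x) (ghat S j y)))).
    by rewrite Hal; field.
  by rewrite mulrDr !mulr_sumr -big_split /=; apply: eq_bigr => j _; field.
have orth : forall h : Y -> 'rV[R]_d,
    \sum_x \sum_y (P i x y - q i x y) * dotv (f x) (h y) = 0.
  move=> h.
  have H0 : \sum_S pS S * (\sum_x \sum_y (emp_dist R (S i) x y - qh S i x y) * dotv (f x) (h y)) = 0.
    by apply: big1 => S _; rewrite (@foc _ _ _ _ f PX (P i) _ _ (Hm i) HPX (Hmin S i) h) mulr0.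
  rewrite -[RHS]H0; under [RHS]eq_bigr do rewrite mulr_sumr.
  rewrite [RHS]exchange_big /=; apply: eq_bigr => x _.
  under [RHS]eq_bigr do rewrite mulr_sumr.
  rewrite [RHS]exchange_big /=; apply: eq_bigr => y _.
  apply: (@eq_trans _ _ ((\sum_S pS S * emp_dist R (S i) x y - \sum_S pS S * qh S i x y) * dotv (f x) (h y))); last first.
    by rewrite mulrBl !mulr_suml -sumrB; apply: eq_bigr => S _; ring.
  rewrite Eq /pS (@Ej _ _ _ _ _ _ HP1 i (fun s => emp_dist R s x y)).
  by rewrite (@Eemp _ _ _ _ _ _ HP1 i x y (Hn i)).
pose h := fun y => gbar i y - \sum_j alpha j *: gbar j y.
have sumq : forall x y, \sum_j alpha j * q j x y
    = PX x / K * (1 + \sum_j alpha j * dotv (f x) (gbar j y)).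
  move=> x y; rewrite -{1}Hal mulrDr !mulr_sumr -big_split /=.
  by apply: eq_bigr => j _; rewrite /q /PXQ /Qmodel -/K; field.
have Hb : forall x y, q i x y - \sum_j alpha j * q j x y = PX x / K * dotv (f x) (h y).
  by move=> x y; rewrite sumq /h dotvB dotv_sumZ /q /PXQ /Qmodel -/K; field.
have orth2 : \sum_x \sum_y (P i x y - q i x y) * (q i x y - \sum_j alpha j * q j x y) / PX x = 0.
  apply: (@eq_trans _ _ (K^-1 * \sum_x \sum_y (P i x y - q i x y) * dotv (f x) (h y))); last first.
    by rewrite orth mulr0.
  rewrite mulr_sumr; apply: eq_bigr => x _.
  rewrite mulr_sumr; apply: eq_bigr => y _; rewrite Hb.
  have := HPX x; rewrite lt0r => /andP[P0 _]; field; exact/andP.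
pose a x y := P i x y - q i x y.
pose b x y := q i x y - \sum_j alpha j * q j x y.
pose D x y := \sum_j alpha j ^+ 2 * \sum_S pS S * c j S x y ^+ 2.
have LHS : Ri = \sum_x \sum_y ((a x y + b x y) ^+ 2 + D x y) / PX x.
  rewrite /Ri /expect /chi2 -/pS.
  under eq_bigr do rewrite mulr_sumr.
  rewrite exchange_big /=; apply: eq_bigr => x _.
  under eq_bigr do rewrite mulr_sumr.
  rewrite exchange_big /=; apply: eq_bigr => y _.
  rewrite Hm.
  under eq_bigr do rewrite mulrA.
  rewrite -mulr_suml; congr (_ / _).
  have pt : forall S, P i x y - PXQ PX f (ghat_star S) x y = (a x y + b x y) + \sum_j alpha j * c j S x y.
    move=> S; rewrite star /a /b /c.
    under [X in _ = _ + X]eq_bigr do rewrite mulrBr.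
    by rewrite sumrB; ring.
  under eq_bigr do rewrite pt.
  rewrite (@var_expand _ _ _ pS (fun j S => c j S x y) alpha (a x y + b x y) E1) //.
  by move=> j k jk; apply: Ecc.
have RV : \sum_j alpha j ^+ 2 / (n j)%:R * V j = \sum_x \sum_y D x y / PX x.
  have Vj : forall j, alpha j ^+ 2 / (n j)%:R * V j
      = \sum_x \sum_y alpha j ^+ 2 * (\sum_S pS S * c j S x y ^+ 2) / PX x.
    move=> j; rewrite /V mulrA mulfVK; last by rewrite pnatr_eq0 -lt0n Hn.
    have -> : \sum_x \sum_y alpha j ^+ 2 * (\sum_S pS S * c j S x y ^+ 2) / PX x
       = alpha j ^+ 2 * \sum_x \sum_y (\sum_S pS S * c j S x y ^+ 2) / PX x.
      rewrite mulr_sumr; apply: eq_bigr => x _; rewrite mulr_sumr; apply: eq_bigr => y _.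
      by rewrite mulrA.
    congr (_ * _).
    rewrite /expect /chi2 -/pS.
    under eq_bigr do rewrite mulr_sumr.
    rewrite exchange_big /=; apply: eq_bigr => x _.
    under eq_bigr do rewrite mulr_sumr.
    rewrite exchange_big /=; apply: eq_bigr => y _.
    rewrite Hm mulr_suml; apply: eq_bigr => S _.
    by rewrite /c /qh /q /pS; ring.
  rewrite (eq_bigr _ (fun j _ => Vj j)) exchange_big /=; apply: eq_bigr => x _.
  rewrite exchange_big /=; apply: eq_bigr => y _.
  by rewrite /D mulr_suml.
rewrite LHS RV /chi2.
apply: (@eq_trans _ _ (\sum_x \sum_y b x y ^+ 2 / PX x + \sum_x \sum_y D x y / PX x
   + \sum_x \sum_y a x y ^+ 2 / PX x
   + 2 * \sum_x \sum_y a x y * b x y / PX x)); last first.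
  rewrite orth2 mulr0 addr0; congr (_ + _ + _).
    by apply: eq_bigr => x _; apply: eq_bigr => y _; rewrite Hm.
  by apply: eq_bigr => x _; apply: eq_bigr => y _; rewrite Hm.
rewrite mulr_sumr -!big_split /=; apply: eq_bigr => x _.
rewrite mulr_sumr -!big_split /=; apply: eq_bigr => y _.
have := HPX x; rewrite lt0r => /andP[P0 _]; field.
exact: P0. Qed.
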